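(* Let $p,g\in\mathbb{Q}[x]$ with $p$ irreducible in $\mathbb{Q}[x]$ and $p\nmid g$. Suppose there exist $N\in\mathbb{N}$, $\overline h_1,\dots,\overline h_N\in\mathbb{Q}[x]$ with $\deg\overline h_i<\deg p$, and $\omega_1,\dots,\omega_N\in\mathbb{Q}_{>0}$ such that $g\equiv\sum_{i=1}^N\omega_i\overline h_i^2\pmod p$. Then for every integer $e\ge1$ there exist $h_1,\dots,h_N\in\mathbb{Q}[x]$ with $\deg h_i<e\deg p$ such that $g\equiv\sum_{i=1}^N\omega_ih_i^2\pmod{p^e}$. *)

(* Defs.v *)
From mathcomp Require Import all_boot all_order all_algebra.
Set Implicit Arguments. Unset Strict Implicit. Unset Printing Implicit Defensive.
Import GRing.Theory Num.Theory.
Local Open Scope ring_scope.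

(* deg h < d  (with deg 0 = -oo), written via size = deg + 1 *)
Definition deg_lt (h : {poly rat}) (d : nat) : bool := (size h <= d)%N.

(* Main.v *)
Require Import Defs.
From mathcomp Require Import all_boot all_order all_algebra.
From mathcomp Require Import ring.
Import GRing.Theory Num.Theory.
Local Open Scope ring_scope.

Lemma lift_step (p r h : {poly rat}) (c : rat) (k : nat) :
  c != 0 -> coprimep h p -> p ^+ k.+1 %| r - c *: h ^+ 2 ->
  exists h', coprimep h' p /\ p ^+ k.+2 %| r - c *: h' ^+ 2.
Proof.
move=> c0 cop /dvdpP [s Hs].
have [[u1 u2] /= Hu] := Bezout_eq1_coprimepP _ _ cop.
set ic := ((2 * c)^-1)%:P.
have Hc : 1 - 2%:R * c%:P * ic = 0.
  rewrite /ic -polyCMn -!polyCM -polyCB; apply/eqP; rewrite polyC_eq0 subr_eq0.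
  rewrite mulfV ?eqxx // mulf_neq0 // pnatr_eq0.
set P0 := p ^+ k.
have Hq : p ^+ k.+1 = P0 * p by rewrite exprSr.
set t := ic * s * u1.
exists (h + t * p ^+ k.+1); split.
  by rewrite Hq addrC mulrA coprimep_sym coprimep_addl_mul coprimep_sym.
apply/dvdpP; exists (s * u2 - c%:P * (t ^+ 2 * P0)).
have Hr : r = s * (P0 * p) + c%:P * h ^+ 2.
  by rewrite -Hq -Hs mul_polyC subrK.
rewrite [p ^+ k.+2]exprSr Hq Hr -!mul_polyC.
apply/eqP; rewrite -subr_eq0.
have -> : s * (P0 * p) + c%:P * h ^+ 2 - c%:P * (h + t * (P0 * p)) ^+ 2 -
   (s * u2 - c%:P * (t ^+ 2 * P0)) * (P0 * p * p)
   = s * (P0 * p) * u1 * h * (1 - 2%:R * c%:P * ic)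
     + s * (P0 * p) * (1 - (u1 * h + u2 * p)) by rewrite /t; clearbody t ic P0; ring.
by rewrite Hc Hu subrr !mulr0 addr0.
Qed.

Lemma lift (p r h : {poly rat}) (c : rat) :
  c != 0 -> coprimep h p -> p %| r - c *: h ^+ 2 ->
  forall e, (1 <= e)%N -> exists h', p ^+ e %| r - c *: h' ^+ 2.
Proof.
move=> c0 cop d1 [|e] // _.
suff : exists h', coprimep h' p /\ p ^+ e.+1 %| r - c *: h' ^+ 2.
  by case=> h' [_ ?]; exists h'.
elim: e => [|e [h' [cop' d']]]; first by exists h; rewrite expr1.
exact: (@lift_step _ _ _ _ _ c0 cop' d').
Qed.

Lemma dvdp_bigsum (I : Type) (s : seq I) (P : pred I) (F : I -> {poly rat}) (d : {poly rat}) :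
  (forall i, P i -> d %| F i) -> d %| \sum_(i <- s | P i) F i.
Proof.
move=> H; apply: (big_ind (fun x => d %| x)) => [|x y|i Pi]; [exact: dvdp0 | exact: dvdp_add | exact: H].
Qed.

Theorem mainTheorem7 (p g : {poly rat}) (N : nat)
  (hbar : 'I_N -> {poly rat}) (w : 'I_N -> rat) :
  irreducible_poly p -> ~~ (p %| g) ->
  (forall i, 0 < w i) ->
  (forall i, deg_lt (hbar i) (size p).-1) ->
  p %| g - \sum_(i < N) w i *: (hbar i) ^+ 2 ->
  forall e : nat, (1 <= e)%N ->
  exists h : 'I_N -> {poly rat},
    (forall i, deg_lt (h i) (e * (size p).-1)) /\
    p ^+ e %| g - \sum_(i < N) w i *: (h i) ^+ 2.
Proof.
move=> irr ndg wpos _ dv e e1.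
have [j Hj] : exists j, ~~ (p %| hbar j).
  case: (pickP (fun i => ~~ (p %| hbar i))) => [j Hj|H]; first by exists j.
  exfalso; move/negP: ndg; apply.
  have := dvdp_add dv (@dvdp_bigsum _ (index_enum 'I_N) xpredT
     (fun i => w i *: hbar i ^+ 2) p _).
  rewrite subrK; apply => i _.
  have := H i; rewrite /= => /negbFE Hi.
  by rewrite -mul_polyC dvdp_mull // expr2 dvdp_mulr.
have cop : coprimep (hbar j) p by rewrite coprimep_sym irreducible_poly_coprime.
set r := g - \sum_(i < N | i != j) w i *: hbar i ^+ 2.
have Er : g - \sum_(i < N) w i *: hbar i ^+ 2 = r - w j *: hbar j ^+ 2.
  by rewrite (bigD1 j) //= /r opprD addrA addrAC.
have wj : w j != 0 by rewrite lt0r_neq0 // wpos.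
have dv' : p %| r - w j *: hbar j ^+ 2 by rewrite -Er.
have [h' Hh'] := @lift _ _ _ _ wj cop dv' e e1.
pose H i := if i == j then h' else hbar i.
have EH : g - \sum_(i < N) w i *: H i ^+ 2 = r - w j *: h' ^+ 2.
  rewrite (bigD1 j) //= /H eqxx /r opprD addrA addrAC; congr (_ - _ - _).
  by apply: eq_bigr => i /negbTE ->.
have pe0 : p ^+ e != 0.
  rewrite expf_neq0 //; apply/eqP => p0; case: irr => sz _.
  by move: sz; rewrite p0 size_poly0.
exists (fun i => H i %% p ^+ e); split.
  move=> i; rewrite /deg_lt.
  have := ltn_modpN0 (H i) pe0.
  have := size_exp p e.
  have sz : (0 < size (p ^+ e))%N by rewrite size_poly_gt0.
  by rewrite mulnC => <- lt; rewrite -ltnS prednK.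
have -> : g - \sum_(i < N) w i *: (H i %% p ^+ e) ^+ 2 =
   (g - \sum_(i < N) w i *: H i ^+ 2) +
   \sum_(i < N) w i *: (H i ^+ 2 - (H i %% p ^+ e) ^+ 2).
  under [X in _ = _ + X]eq_bigr do rewrite scalerBr.
  by rewrite sumrB addrA subrK.
rewrite EH; apply: dvdp_add => //.
apply: dvdp_bigsum => i _; rewrite -mul_polyC dvdp_mull //.
have -> : H i ^+ 2 - (H i %% p ^+ e) ^+ 2 =
   (H i - H i %% p ^+ e) * (H i + H i %% p ^+ e) by ring.
apply: dvdp_mulr.
by rewrite {1}(divp_eq (H i) (p ^+ e)) addrK dvdp_mull.
Qed.
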